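(* Let $w\in\mathbb{R}^N_{>0}$, $R\ge2$, $1\le K\le R$, assume $\mu_i\ge1$ for all $i$, and let $\nu=w^{-1}\odot\big(\frac{K-1}{R-1}\mu+\frac{R-K}{R-1}\mathbf{1}\big)$. Consider Algorithm 6: initialize $y^{(0)}\in\mathcal{B}$; at each iteration $k$ draw $C_{i_k}\subseteq[R]$ uniformly at random among subsets of size $K$, independently of the past; for $r\in C_{i_k}$ set $y^{(k+1)}_r=\Pi_{\mathcal{B}_r,\nu}\big(y^{(k)}_r-\nu^{-1}\odot\nabla_rg_w(y^{(k)})\big)$, and $y^{(k+1)}_r=y^{(k)}_r$ for $r\notin C_{i_k}$. Let $g_w^*=\min_{y\in\mathcal{B}}g_w(y)$. Then for all $k\ge0$, $$\mathbb{E}\Big[g_w(y^{(k)})-g_w^*+\tfrac12d^2_{I(\nu)}(y^{(k)},\Xi_w)\Big]\le\Big[1-\frac{4K}{R(\|w\|_1\|\nu\|_1+2)}\Big]^k\Big[g_w(y^{(0)})-g_w^*+\tfrac12d^2_{I(\nu)}(y^{(0)},\Xi_w)\Big].$$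
   Context: $F_r:2^{[N]}\to\mathbb{R}$ ($r\in[R]$) are submodular with $F_r(\emptyset)=0$, base polytopes $\mathcal{B}_r=\{u\in\mathbb{R}^N:\sum_{i\in S}u_i\le F_r(S)\ \forall S,\ \sum_iu_i=F_r([N])\}$; $\mathcal{B}=\mathcal{B}_1\times\cdots\times\mathcal{B}_R$; $A:(\mathbb{R}^N)^R\to\mathbb{R}^N$, $Ay=\sum_ry_r$. $g_w(y)=\frac12\|Ay\|^2_{2,w^{-1}}$, with block gradient $\nabla_rg_w(y)=w^{-1}\odot Ay$. $S_r$ is the set of $i$ with $F_r(S\cup\{i\})\ne F_r(S)$ for some $S\subseteq[N]\setminus\{i\}$; $\mu_i=|\{r:i\in S_r\}|$; $\mathbf{1}$ is the all-ones vector. $\Xi_w$ is the set of minimizers of $g_w$ over $\mathcal{B}$. Powers, inverses and $\odot$ are element-wise; $\|z\|_{2,v}=\sqrt{\sum_iv_iz_i^2}$; $\Pi_{\Omega,v}(u)=\arg\min_{z\in\Omega}\|z-u\|_{2,v}$; $I(v)$ has all $R$ blocks equal to $v$; $\|y\|_{2,\theta}=\sqrt{\sum_r\|y_r\|^2_{2,\theta_r}}$; $d_\theta(y,\mathcal{K})=\min_{z\in\mathcal{K}}\|y-z\|_{2,\theta}$. *)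

(* Defs.v *)
From HB Require Import structures.
From mathcomp Require Import all_boot all_order all_algebra.
Set Implicit Arguments. Unset Strict Implicit. Unset Printing Implicit Defensive.
Import Order.TTheory GRing.Theory Num.Theory.
Local Open Scope ring_scope.

Section Defs.
Variables (T : rcfType) (N R : nat).

Definition vec := 'I_N -> T.
Definition state := 'I_R -> vec.

Definition submodular (f : {set 'I_N} -> T) : Prop :=
  f set0 = 0 /\
  forall A B : {set 'I_N}, f (A :|: B) + f (A :&: B) <= f A + f B.

Definition in_base (f : {set 'I_N} -> T) (u : vec) : Prop :=
  (forall S : {set 'I_N}, \sum_(i in S) u i <= f S) /\
  \sum_i u i = f setT.

Definition in_B (F : 'I_R -> {set 'I_N} -> T) (y : state) : Prop :=
  forall r, in_base (F r) (y r).

Definition supp (f : {set 'I_N} -> T) : {set 'I_N} :=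
  [set i | [exists S : {set 'I_N}, (i \notin S) && (f (i |: S) != f S)]].

Definition mu (F : 'I_R -> {set 'I_N} -> T) (i : 'I_N) : nat :=
  #|[set r : 'I_R | i \in supp (F r)]|.

Definition wsq (v z : vec) : T := \sum_i v i * z i ^+ 2.

Definition bsq (v : vec) (y : state) : T := \sum_r wsq v (y r).

Definition vsub (a b : vec) : vec := fun i => a i - b i.
Definition ssub (a b : state) : state := fun r => vsub (a r) (b r).

Definition Aop (y : state) : vec := fun i => \sum_r y r i.

Definition gw (w : vec) (y : state) : T := 2^-1 * wsq (fun i => (w i)^-1) (Aop y).

Definition gradr (w : vec) (y : state) (r : 'I_R) : vec :=
  fun i => (w i)^-1 * Aop y i.

Definition nu (K : nat) (F : 'I_R -> {set 'I_N} -> T) (w : vec) : vec :=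
  fun i => (w i)^-1 *
    (((K - 1)%:R / (R - 1)%:R) * (mu F i)%:R + ((R - K)%:R / (R - 1)%:R)).

Definition is_proj (F : 'I_R -> {set 'I_N} -> T) (v : vec)
    (P : 'I_R -> vec -> vec) : Prop :=
  forall r u, in_base (F r) (P r u) /\
    forall z, in_base (F r) z -> wsq v (vsub (P r u) u) <= wsq v (vsub z u).

Definition step (w v : vec) (P : 'I_R -> vec -> vec) (C : {set 'I_R})
    (y : state) : state :=
  fun r => if r \in C then P r (fun i => y r i - (v i)^-1 * gradr w y r i)
           else y r.

Definition Ksets (K : nat) : {set {set 'I_R}} := [set C : {set 'I_R} | #|C| == K].

(* E[f(y^(k))] when y^(0) = y and C_{i_0}, ..., C_{i_{k-1}} are i.i.d.
   uniform among the K-subsets of [R] *)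
Fixpoint expect (K : nat) (w v : vec) (P : 'I_R -> vec -> vec)
    (f : state -> T) (k : nat) (y : state) : T :=
  match k with
  | 0%N => f y
  | k'.+1 => (#|Ksets K|%:R)^-1 *
      \sum_(C in Ksets K) expect K w v P f k' (step w v P C y)
  end.

End Defs.

(* Main.v *)
Require Import Defs.
From HB Require Import structures.
From mathcomp Require Import all_boot all_order all_algebra.
From mathcomp Require Import zify ring lra.
Import Order.TTheory GRing.Theory Num.Theory.
Local Open Scope ring_scope.
Set Implicit Arguments. Unset Strict Implicit. Unset Printing Implicit Defensive.

Section Poly.
Variables (T : rcfType) (N : nat).
Implicit Types (f : {set 'I_N} -> T) (u v : 'I_N -> T) (A B S X : {set 'I_N}).

Lemma sum_in_ind u S : \sum_(i in S) u i = \sum_i (i \in S)%:R * u i.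
Proof.
rewrite big_mkcond /=; apply: eq_bigr => i _.
by case: (i \in S); rewrite ?mul1r ?mul0r.
Qed.

Lemma sum_setUI u A B :
  \sum_(i in A :|: B) u i + \sum_(i in A :&: B) u i =
  \sum_(i in A) u i + \sum_(i in B) u i.
Proof.
rewrite !sum_in_ind -!big_split /=; apply: eq_bigr => i _.
rewrite !inE; case: (i \in A); case: (i \in B) => /=; ring.
Qed.

Definition tight f u S : bool := \sum_(i in S) u i == f S.

Lemma tightU f u A B : submodular f -> in_base f u ->
  tight f u A -> tight f u B -> tight f u (A :|: B).
Proof.
move=> [_ Hs] [Hb _] /eqP hA /eqP hB; apply/eqP.
have h1 := Hb (A :|: B); have h2 := Hb (A :&: B); have h3 := Hs A B.
have h4 := sum_setUI u A B. lra.
Qed.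

Lemma tightI f u A B : submodular f -> in_base f u ->
  tight f u A -> tight f u B -> tight f u (A :&: B).
Proof.
move=> [_ Hs] [Hb _] /eqP hA /eqP hB; apply/eqP.
have h1 := Hb (A :|: B); have h2 := Hb (A :&: B); have h3 := Hs A B.
have h4 := sum_setUI u A B. lra.
Qed.

Lemma tight0 f u : submodular f -> tight f u set0.
Proof. by move=> [h0 _]; apply/eqP; rewrite big_set0 h0. Qed.

Lemma tightT f u : in_base f u -> tight f u setT.
Proof.
move=> [_ h]; apply/eqP; rewrite -h; apply: eq_bigl => i; by rewrite inE.
Qed.

Lemma tight_bigU f u (I : finType) (P : pred I) (Sf : I -> {set 'I_N}) :
  submodular f -> in_base f u -> (forall j, P j -> tight f u (Sf j)) ->
  tight f u (\bigcup_(j | P j) Sf j).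
Proof.
move=> hs hb ht; apply: (big_ind (tight f u)) => //.
- exact: tight0.
- by move=> ??; apply: tightU.
Qed.

Lemma tight_bigI f u (I : finType) (P : pred I) (Sf : I -> {set 'I_N}) :
  submodular f -> in_base f u -> (forall j, P j -> tight f u (Sf j)) ->
  tight f u (\bigcap_(j | P j) Sf j).
Proof.
move=> hs hb ht; apply: (big_ind (tight f u)) => //.
- exact: tightT.
- by move=> ??; apply: tightI.
Qed.

Lemma sep_lemma f u v X : submodular f -> in_base f u -> in_base f v ->
  (forall j k, j \in X -> 0 < v j - u j -> k \notin X -> v k - u k < 0 ->
     exists S, tight f u S && (j \in S) && (k \notin S)) ->
  \sum_(i in X) (v i - u i) <= 0.
Proof.
move=> hs hu hv H.
pose Sp j k := odflt set0 [pick S | tight f u S && (j \in S) && (k \notin S)].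
have HSp : forall j k, j \in X -> 0 < v j - u j -> k \notin X -> v k - u k < 0 ->
    tight f u (Sp j k) && (j \in Sp j k) && (k \notin Sp j k).
  move=> j k hj hj' hk hk'; rewrite /Sp; case: pickP => [S //|].
  by move=> h0; have [S hS] := H j k hj hj' hk hk'; rewrite h0 in hS.
pose Tt := \bigcup_(j | (j \in X) && (0 < v j - u j))
            \bigcap_(k | (k \notin X) && (v k - u k < 0)) Sp j k.
have tT : tight f u Tt.
  apply: tight_bigU => // j /andP[hj hj']; apply: tight_bigI => // k /andP[hk hk'].
  by case/andP: (HSp j k hj hj' hk hk') => /andP[].
have posT : forall j, j \in X -> 0 < v j - u j -> j \in Tt.
  move=> j hj hj'; apply/bigcupP; exists j; first by rewrite hj.
  apply/bigcapP => k /andP[hk hk'].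
  by case/andP: (HSp j k hj hj' hk hk') => /andP[].
have negT : forall k, k \notin X -> v k - u k < 0 -> k \notin Tt.
  move=> k hk hk'; apply/bigcupP => -[j /andP[hj hj'] /bigcapP hc].
  have := hc k; rewrite hk hk' => /(_ isT).
  by case/andP: (HSp j k hj hj' hk hk') => _ /negP.
have hTle : \sum_(i in Tt) (v i - u i) <= 0.
  rewrite sumrB (eqP tT); case: hv => hv _; have := hv Tt; lra.
apply: le_trans hTle; rewrite !sum_in_ind; apply: ler_sum => i _.
case hX: (i \in X); case hTi: (i \in Tt); rewrite ?mul1r ?mul0r //.
- have [hlt|hge] := ltP 0 (v i - u i); last by [].
  by rewrite (posT i hX hlt) in hTi.
- have [hlt|hge] := ltP (v i - u i) 0; first by rewrite (negbTE (negT i (negbT hX) hlt)) in hTi.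
  by [].
Qed.

Lemma supp0 f u i : submodular f -> in_base f u -> i \notin supp f -> u i = 0.
Proof.
move=> [h0 _] [hb hs] hi.
have hf : forall S, i \notin S -> f (i |: S) = f S.
  move=> S hS; apply/eqP; apply: contraNT hi => hne; rewrite inE.
  by apply/existsP; exists S; rewrite hS hne.
have h1 : u i <= 0.
  have := hb [set i]; rewrite big_set1 -(setU0 [set i]) hf ?inE // h0.
  by [].
have h2 : 0 <= u i.
  have h3 := hb (setT :\ i); rewrite -(hf (setT :\ i)) ?setD11 // in h3.
  have e1 : i |: (setT :\ i) = setT by rewrite setD1K ?inE.
  rewrite e1 -hs [X in _ <= X](bigD1 i) //= in h3.
  have e2 : \sum_(j in setT :\ i) u j = \sum_(j | j != i) u j.
    by apply: eq_bigl => j; rewrite !inE andbT.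
  rewrite e2 in h3; lra.
lra.
Qed.

Lemma base_convex f u v t : in_base f u -> in_base f v -> 0 <= t <= 1 ->
  in_base f (fun i => u i + t * (v i - u i)).
Proof.
move=> [hu hu'] [hv hv'] /andP[t0 t1]; split.
- move=> S; rewrite big_split /= -mulr_sumr sumrB.
  have := hu S; have := hv S; nra.
- rewrite big_split /= -mulr_sumr sumrB hu' hv'; ring.
Qed.
End Poly.


Section Alg.
Variable (T : rcfType).

Lemma quad_lemma (c q : T) : 0 <= q ->
  (forall t, 0 < t -> t <= 1 -> 0 <= 2 * t * c + t ^+ 2 * q) -> 0 <= c.
Proof.
move=> q0 H; rewrite leNgt; apply/negP => c0.
pose t := Num.min 1 (- c / (q + 1)).
have q1 : 0 < q + 1 by lra.
have t0 : 0 < t by rewrite lt_min ltr01 /= divr_gt0 // oppr_gt0.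
have t1 : t <= 1 by rewrite ge_min lexx.
have t2 : t <= - c / (q + 1) by rewrite ge_min lexx orbT.
have t3 : t * q <= - c.
  have : t * (q + 1) <= - c by rewrite -ler_pdivlMr.
  nra.
have := H t t0 t1; nra.
Qed.

Lemma sq_sum (I : finType) (x : I -> T) :
  (\sum_i x i) ^+ 2 = \sum_i \sum_j x i * x j.
Proof. by rewrite expr2 mulr_suml; apply: eq_bigr => i _; rewrite mulr_sumr. Qed.

Lemma pair_sum (I : finType) (x : I -> T) (g : I -> I -> T) :
  (forall i j, 2 * (x i * x j) <= g i j + g j i) ->
  (\sum_i x i) ^+ 2 <= \sum_i \sum_j g i j.
Proof.
move=> H; rewrite sq_sum.
have : 2 * \sum_i \sum_j x i * x j <= 2 * \sum_i \sum_j g i j.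
  have -> : 2 * \sum_i \sum_j g i j = \sum_i \sum_j (g i j + g j i).
    have -> : \sum_i \sum_j (g i j + g j i) = \sum_i \sum_j g i j + \sum_i \sum_j g j i.
      by rewrite -big_split /=; apply: eq_bigr => i _; rewrite big_split.
    by rewrite [X in _ = _ + X]exchange_big; ring.
  rewrite mulr_sumr; apply: ler_sum => i _; rewrite mulr_sumr.
  by apply: ler_sum => j _; apply: H.
lra.
Qed.

Lemma CS1 (I : finType) (c a : I -> T) :
  (\sum_i c i * a i) ^+ 2 <= (\sum_i c i ^+ 2) * (\sum_i a i ^+ 2).
Proof.
apply: le_trans (pair_sum (g := fun i j => c i ^+ 2 * a j ^+ 2) _) _.
  move=> i j; have := sqr_ge0 (c i * a j - c j * a i); nra.
by rewrite mulr_suml; apply: ler_sum => i _; rewrite mulr_sumr.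
Qed.

Lemma CSw (I : finType) (w a : I -> T) : (forall i, 0 < w i) ->
  (\sum_i a i) ^+ 2 <= (\sum_i w i) * (\sum_i a i ^+ 2 / w i).
Proof.
move=> hw.
apply: le_trans (pair_sum (g := fun i j => w i * (a j ^+ 2 / w j)) _) _.
  move=> i j.
  have wi := hw i; have wj := hw j.
  have e : w i * (a j ^+ 2 / w j) + w j * (a i ^+ 2 / w i) - 2 * (a i * a j)
     = (w i * a j - w j * a i) ^+ 2 / (w i * w j).
    by field; apply/andP; split; rewrite gt_eqF.
  have : 0 <= (w i * a j - w j * a i) ^+ 2 / (w i * w j).
    by rewrite divr_ge0 ?sqr_ge0 // mulr_ge0 // ltW.
  lra.
by rewrite mulr_suml; apply: ler_sum => i _; rewrite mulr_sumr.
Qed.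

Lemma sum_sq_le (I : finType) (a : I -> T) : (forall i, 0 <= a i) ->
  \sum_i a i ^+ 2 <= (\sum_i a i) ^+ 2.
Proof.
move=> ha; rewrite sq_sum; apply: ler_sum => i _.
rewrite (bigD1 i) //= -expr2 lerDl; apply: sumr_ge0 => j _.
by apply: mulr_ge0.
Qed.

End Alg.


Section Count.
Variables (T : rcfType) (R K : nat).

Lemma card_Ksets : #|Ksets R K| = 'C(R, K).
Proof.
by rewrite -[X in 'C(X, _)]card_ord -card_draws; apply: eq_card => C; rewrite !inE.
Qed.

Lemma cnt_subset (B : {set 'I_R}) :
  \sum_(C in Ksets R K) ((C \subset B)%:R : T) = ('C(#|B|, K))%:R.
Proof.
transitivity (\sum_(C in [set C : {set 'I_R} | C \subset B & #|C| == K]) (1:T)).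
  rewrite big_mkcond [RHS]big_mkcond; apply: eq_bigr => C _; rewrite !inE.
  by case: (C \subset B); case: (#|C| == K).
by rewrite sumr_const cards_draws.
Qed.

Lemma notin_subset (r : 'I_R) (C : {set 'I_R}) : (r \notin C) = (C \subset [set~ r]).
Proof.
apply/idP/subsetP => [h x hx | h]; first by rewrite !inE; apply: contraNneq h => <-.
by apply/negP => /h; rewrite !inE eqxx.
Qed.

Lemma notin2_subset (r s : 'I_R) (C : {set 'I_R}) :
  (r \notin C) && (s \notin C) = (C \subset ~: [set r; s]).
Proof.
apply/andP/subsetP => [[h1 h2] x hx | h].
  rewrite !inE negb_or; apply/andP; split.
    by apply: contraNneq h1 => <-.
  by apply: contraNneq h2 => <-.
split; apply/negP => /h; rewrite !inE eqxx /= ?orbT //.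
Qed.

Lemma cnt1 (r : 'I_R) : (1 <= K)%N ->
  R%:R * \sum_(C in Ksets R K) ((r \in C)%:R : T) = K%:R * #|Ksets R K|%:R.
Proof.
move=> hK.
have e : \sum_(C in Ksets R K) ((r \in C)%:R : T)
   = #|Ksets R K|%:R - \sum_(C in Ksets R K) ((C \subset [set~ r])%:R : T).
  have -> : #|Ksets R K|%:R = \sum_(C in Ksets R K) (1:T) by rewrite sumr_const.
  rewrite -sumrB; apply: eq_bigr => C _.
  by rewrite -notin_subset; case: (r \in C); rewrite ?subr0 ?subrr.
rewrite e cnt_subset cardsC1 card_Ksets card_ord; clear e.
case: R r => [|n] r; first by case: r.
case: K hK => [//|k] _ /=.
rewrite [in LHS]binS natrD addrAC subrr add0r.
have := mul_bin_diag n.+1 k; rewrite /= => h.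
by rewrite -!natrM h -natrD -(binS n k) natrM.
Qed.

Lemma cnt2 (r s : 'I_R) : (1 <= K)%N -> r != s ->
  R%:R * (R%:R - 1) * \sum_(C in Ksets R K) ((r \in C)%:R * (s \in C)%:R : T)
  = K%:R * (K%:R - 1) * #|Ksets R K|%:R.
Proof.
move=> hK hrs.
have e : \sum_(C in Ksets R K) ((r \in C)%:R * (s \in C)%:R : T)
   = #|Ksets R K|%:R - \sum_(C in Ksets R K) ((C \subset [set~ r])%:R : T)
     - \sum_(C in Ksets R K) ((C \subset [set~ s])%:R : T)
     + \sum_(C in Ksets R K) ((C \subset ~: [set r; s])%:R : T).
  have -> : #|Ksets R K|%:R = \sum_(C in Ksets R K) (1:T) by rewrite sumr_const.
  rewrite -!sumrB -big_split /=.
  apply: eq_bigr => C _.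
  rewrite -!notin_subset -notin2_subset.
  by case: (r \in C); case: (s \in C); rewrite /=; ring.
have c2 : #|~: [set r; s]| = (R - 2)%N.
  have h := cardsC [set r; s]; rewrite cards2 hrs card_ord in h.
  by rewrite -[in RHS]h addKn.
rewrite e !cnt_subset !cardsC1 c2 card_Ksets card_ord; clear e c2.
case: R r s hrs => [|[|n]] r s hrs.
- by move: hrs; case: r.
- by move: hrs; rewrite (ord1 r) (ord1 s) eqxx.
case: K hK => [//|[|k]] _ /=.
- rewrite !bin1 subSS subSS subn0 !mulrSr; ring.
- rewrite subSS subSS subn0.
  have e1 : 'C(n.+2, k.+2) = 'C(n.+1, k.+2) + 'C(n.+1, k.+1) by rewrite binS.
  have e2 : 'C(n.+1, k.+2) = 'C(n, k.+2) + 'C(n, k.+1) by rewrite binS.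
  have e3 : 'C(n.+1, k.+1) = 'C(n, k.+1) + 'C(n, k) by rewrite binS.
  have d1 := mul_bin_diag n.+2 k.+1.
  have d2 := mul_bin_diag n.+1 k.
  rewrite /= in d1 d2.
  have : ((n.+2)%:R * (n.+1)%:R * ('C(n,k))%:R : T) = (k.+2)%:R * (k.+1)%:R * ('C(n.+2,k.+2))%:R.
    by rewrite -!natrM -mulnA d2 mulnCA d1 mulnCA mulnA.
  move=> h.
  have hL : ('C(n.+2,k.+2)%:R - 'C(n.+1,k.+2)%:R - 'C(n.+1,k.+2)%:R + 'C(n,k.+2)%:R : T) = 'C(n,k)%:R.
    rewrite e1 e2 e3 !natrD; ring.
  have s1 : (n.+2%:R - 1 : T) = n.+1%:R by rewrite mulrSr addrK.
  have s2 : (k.+2%:R - 1 : T) = k.+1%:R by rewrite mulrSr addrK.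
  by rewrite hL s1 s2 h.
Qed.

End Count.


Section Gen.
Variable T : rcfType.

Lemma sum_eq_r (I : finType) (x : I) (g : I -> T) :
  \sum_v g v * (x == v)%:R = g x.
Proof.
rewrite (bigD1 x) //= eqxx mulr1 big1 ?addr0 // => v hv.
by rewrite eq_sym (negbTE hv) mulr0.
Qed.

Lemma sum_eq_l (I : finType) (x : I) (g : I -> T) :
  \sum_v (x == v)%:R * g v = g x.
Proof. by rewrite -(sum_eq_r x g); apply: eq_bigr => v _; rewrite mulrC. Qed.

Lemma telescope (I : eqType) (x : I) (s : seq I) (g : I -> T) :
  \sum_(pr <- zip (x :: s) s) (g pr.2 - g pr.1) = g (last x s) - g x.
Proof.
elim: s x => [|a s IH] x /=; first by rewrite big_nil subrr.
by rewrite big_cons /= IH; ring.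
Qed.

Lemma path_zip (I : eqType) (e : rel I) (x : I) (s : seq I) :
  path e x s -> forall pr, pr \in zip (x :: s) s -> e pr.1 pr.2.
Proof.
elim: s x => [|a s IH] x //= /andP[hxa hp] pr.
rewrite in_cons => /orP[/eqP -> //|]; exact: IH.
Qed.

Lemma sum_const_seq (I : Type) (s : seq I) : \sum_(pr <- s) (1 : T) = (size s)%:R.
Proof. by rewrite -sum1_size natr_sum. Qed.

Lemma mymin_le (I : eqType) (s : seq I) (P : pred I) (g : I -> T) (x0 : T) j :
  j \in s -> P j -> \big[Num.min/x0]_(i <- s | P i) g i <= g j.
Proof.
elim: s => [|a s IH] //; rewrite in_cons big_cons => /orP[/eqP <- -> | hj hP].
  by rewrite ge_min lexx.
case: (P a); last exact: IH.
by rewrite ge_min IH ?orbT.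
Qed.

Lemma mymin_gt0 (I : Type) (s : seq I) (P : pred I) (g : I -> T) :
  (forall i, P i -> 0 < g i) -> 0 < \big[Num.min/1]_(i <- s | P i) g i.
Proof.
move=> h; apply: (big_ind (fun x => 0 < x)) => //.
by move=> a b ha hb; rewrite lt_min ha hb.
Qed.

Definition posp (x : T) := Num.max x 0.
Definition negp (x : T) := Num.max (- x) 0.

Lemma posp_ge0 x : 0 <= posp x. Proof. by rewrite /posp le_max lexx orbT. Qed.
Lemma negp_ge0 x : 0 <= negp x. Proof. by rewrite /negp le_max lexx orbT. Qed.
Lemma pn_cases x : (posp x = x /\ negp x = 0 /\ 0 <= x) \/ (posp x = 0 /\ negp x = - x /\ x <= 0).
Proof.
rewrite /posp /negp; have [h|h] := leP 0 x.
  by left; split => //; split => //; rewrite max_r // oppr_le0.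
by right; split => //; split; [rewrite max_l // oppr_ge0 ltW | exact: ltW].
Qed.
Lemma pn_sub x : posp x - negp x = x.
Proof. by case: (pn_cases x) => [[-> [-> _]]|[-> [-> _]]]; ring. Qed.
Lemma pn_sq x : x ^+ 2 = posp x ^+ 2 + negp x ^+ 2.
Proof. by case: (pn_cases x) => [[-> [-> _]]|[-> [-> _]]]; ring. Qed.
Lemma pn_abs x : `|x| = posp x + negp x.
Proof.
case: (pn_cases x) => [[-> [-> h]]|[-> [-> h]]].
  by rewrite ger0_norm // addr0.
by rewrite ler0_norm // add0r.
Qed.
Lemma le_posp x : x <= posp x. Proof. by rewrite /posp le_max lexx. Qed.
Lemma le_negp x : - x <= negp x. Proof. by rewrite /negp le_max lexx. Qed.

End Gen.


Section Hoff.
Variables (T : rcfType) (N R : nat) (F : 'I_R -> {set 'I_N} -> T) (nv : 'I_N -> T).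
Hypothesis Hnv : forall i, 0 < nv i.
Hypothesis HF : forall r, submodular (F r).
Variable r0 : 'I_R.
Variables (y xi : state T N R).
Hypotheses (Hy : in_B F y) (Hxi : in_B F xi).
Hypothesis Hmin : forall z, in_B F z -> (forall i, Aop z i = Aop xi i) ->
   bsq nv (ssub y xi) <= bsq nv (ssub y z).

Definition dl r i := y r i - xi r i.

Definition arc r k j : bool := (0 < dl r j) && (dl r k < 0) &&
  ~~ [exists S : {set 'I_N}, tight (F r) (xi r) S && (j \in S) && (k \notin S)].

Definition eg : rel 'I_N := fun k j => [exists r, arc r k j].

Lemma inclosed_le (X : {set 'I_N}) :
  (forall k j, eg k j -> j \in X -> k \in X) -> forall r, \sum_(i in X) dl r i <= 0.
Proof.
move=> hX r; apply: (sep_lemma (HF r) (Hxi r) (Hy r)) => j k hj hj' hk hk'.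
case: (boolP [exists S : {set 'I_N}, tight (F r) (xi r) S && (j \in S) && (k \notin S)]).
  by move=> /existsP [S hS]; exists S.
move=> hn; have : eg k j by apply/existsP; exists r; rewrite /arc /dl hj' hk' hn.
by move=> /hX /(_ hj); rewrite (negbTE hk).
Qed.

Section Cycle.
Variables (x : 'I_N) (s : seq 'I_N).
Hypotheses (hp : path eg x s) (hl : last x s = x) (hne : s != [::]).

Let pairs := zip (x :: s) s.
Let bl k j := odflt r0 [pick r | arc r k j].

Lemma bl_arc pr : pr \in pairs -> arc (bl pr.1 pr.2) pr.1 pr.2.
Proof.
move=> /(path_zip hp) /existsP [r hr]; rewrite /bl.
by case: pickP => [r' //|/(_ r)]; rewrite hr.
Qed.

Let Dl r v := \sum_(pr <- pairs) (bl pr.1 pr.2 == r)%:R * ((pr.2 == v)%:R - (pr.1 == v)%:R : T).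

Lemma Dl_sumr v : \sum_r Dl r v = 0.
Proof.
rewrite /Dl exchange_big /=.
rewrite (eq_bigr (fun pr => (pr.2 == v)%:R - (pr.1 == v)%:R)); last first.
  by move=> pr _; rewrite sum_eq_l.
by rewrite (telescope x s (fun a => (a == v)%:R)) hl subrr.
Qed.

Lemma Dl_sumv r : \sum_v Dl r v = 0.
Proof.
rewrite /Dl exchange_big /= big1_seq // => pr _.
rewrite -mulr_sumr sumrB.
have e : forall a : 'I_N, \sum_v ((a == v)%:R : T) = 1.
  move=> a; rewrite (bigD1 a) //= eqxx big1 ?addr0 // => v hv.
  by rewrite eq_sym (negbTE hv).
by rewrite !e subrr mulr0.
Qed.

Lemma Dl_sumS r (S : {set 'I_N}) : \sum_(v in S) Dl r v =
  \sum_(pr <- pairs) (bl pr.1 pr.2 == r)%:R * ((pr.2 \in S)%:R - (pr.1 \in S)%:R).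
Proof.
rewrite sum_in_ind /Dl.
rewrite (eq_bigr (fun v => \sum_(pr <- pairs) (v \in S)%:R * ((bl pr.1 pr.2 == r)%:R
    * ((pr.2 == v)%:R - (pr.1 == v)%:R)))); last by move=> v _; rewrite mulr_sumr.
rewrite exchange_big /=; apply: eq_bigr => pr _.
rewrite -(sum_eq_l pr.2 (fun v => (v \in S)%:R)) -(sum_eq_l pr.1 (fun v => (v \in S)%:R)).
rewrite -sumrB mulr_sumr; apply: eq_bigr => v _.
rewrite [(pr.2 == v)]eq_sym [(pr.1 == v)]eq_sym.
by case: (v == pr.2); case: (v == pr.1); case: (v \in S); case: (_ == r); rewrite /=; ring.
Qed.

Lemma Dl_tight r (S : {set 'I_N}) : tight (F r) (xi r) S -> \sum_(v in S) Dl r v <= 0.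
Proof.
move=> hS; rewrite Dl_sumS big_seq; apply: sumr_le0 => pr hpr.
case: eqP => [hr|_]; last by rewrite mul0r.
rewrite mul1r; have := bl_arc hpr; rewrite hr => /andP[_ hn].
case h2: (pr.2 \in S); case h1: (pr.1 \in S); rewrite ?subrr ?sub0r ?oppr_le0 ?ler01 //.
exfalso; apply: (negP hn); apply/existsP; exists S; by rewrite hS h2 h1.
Qed.

Let L : T := (size pairs)%:R.

Lemma L_gt0 : 0 < L.
Proof. by rewrite /L /pairs; case: s hne => [//|a s'] _ /=; rewrite ltr0Sn. Qed.

Lemma Dl_le r (S : {set 'I_N}) : \sum_(v in S) Dl r v <= L.
Proof.
rewrite Dl_sumS /L -sum_const_seq; apply: ler_sum => pr _.
by case: (_ == r); case: (pr.2 \in S); case: (pr.1 \in S); rewrite /=; lra.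
Qed.

Let sl r (S : {set 'I_N}) := F r S - \sum_(i in S) xi r i.
Let sigma := \big[Num.min/1]_(p : 'I_R * {set 'I_N} | ~~ tight (F p.1) (xi p.1) p.2) sl p.1 p.2.

Lemma sigma_gt0 : 0 < sigma.
Proof.
apply: mymin_gt0 => -[r S] /= hn; rewrite /sl subr_gt0 lt_def.
case: (Hxi r) => hb _; rewrite hb andbT; by rewrite eq_sym.
Qed.

Lemma sigma_le r (S : {set 'I_N}) : ~~ tight (F r) (xi r) S -> sigma <= sl r S.
Proof.
move=> hn; exact: (@mymin_le T _ _ (fun p : 'I_R * {set 'I_N} => ~~ tight (F p.1) (xi p.1) p.2)
  (fun p => sl p.1 p.2) 1 (r, S) (mem_index_enum _) hn).
Qed.

Let c := \sum_(pr <- pairs) (nv pr.2 * dl (bl pr.1 pr.2) pr.2 - nv pr.1 * dl (bl pr.1 pr.2) pr.1).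

Lemma c_gt0 : 0 < c.
Proof.
have hterm : forall pr, pr \in pairs -> 0 < nv pr.2 * dl (bl pr.1 pr.2) pr.2 - nv pr.1 * dl (bl pr.1 pr.2) pr.1.
  move=> pr hpr; case/andP: (bl_arc hpr) => /andP[h2 h1] _.
  have := Hnv pr.1; have := Hnv pr.2; nra.
rewrite /c; move: hterm; rewrite /pairs; case: s hne => [//|a s'] _ /= hterm.
rewrite big_cons; apply: ltr_wpDr; last by apply: hterm; rewrite in_cons eqxx.
rewrite big_seq; apply: sumr_ge0 => pr hpr; apply: ltW; apply: hterm.
by rewrite in_cons hpr orbT.
Qed.

Lemma Dl_mul (g : 'I_R -> 'I_N -> T) r :
  \sum_v g r v * Dl r v = \sum_(pr <- pairs) (bl pr.1 pr.2 == r)%:R * (g r pr.2 - g r pr.1).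
Proof.
rewrite /Dl.
rewrite (eq_bigr (fun v => \sum_(pr <- pairs) g r v * ((bl pr.1 pr.2 == r)%:R *
   ((pr.2 == v)%:R - (pr.1 == v)%:R)))); last by move=> v _; rewrite mulr_sumr.
rewrite exchange_big /=; apply: eq_bigr => pr _.
rewrite -(sum_eq_r pr.2 (g r)) -(sum_eq_r pr.1 (g r)) -sumrB mulr_sumr.
by apply: eq_bigr => v _; ring.
Qed.

Lemma c_eq : \sum_r \sum_v nv v * dl r v * Dl r v = c.
Proof.
rewrite (eq_bigr (fun r => \sum_(pr <- pairs) (bl pr.1 pr.2 == r)%:R *
   (nv pr.2 * dl r pr.2 - nv pr.1 * dl r pr.1))); last first.
  by move=> r _; rewrite -(Dl_mul (fun r v => nv v * dl r v)).
rewrite exchange_big /c; apply: eq_bigr => pr _.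
by rewrite (sum_eq_l (bl pr.1 pr.2) (fun r => nv pr.2 * dl r pr.2 - nv pr.1 * dl r pr.1)).
Qed.

Let q := \sum_r \sum_v nv v * Dl r v ^+ 2.

Lemma q_ge0 : 0 <= q.
Proof.
apply: sumr_ge0 => r _; apply: sumr_ge0 => v _.
by apply: mulr_ge0; [apply: ltW | apply: sqr_ge0].
Qed.

Let t := Num.min (sigma / L) (c / (q + 1)).

Lemma t_gt0 : 0 < t.
Proof.
have := q_ge0; have := c_gt0; have := sigma_gt0; have := L_gt0 => h1 h2 h3 h4.
by rewrite lt_min !divr_gt0 //; lra.
Qed.

Lemma tL : t * L <= sigma.
Proof. by rewrite -ler_pdivlMr ?L_gt0 // ge_min lexx. Qed.

Lemma tq : t * q <= c.
Proof.
have h : t <= c / (q + 1) by rewrite ge_min lexx orbT.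
have hq := q_ge0; have ht := t_gt0.
have : t * (q + 1) <= c by rewrite -ler_pdivlMr //; lra.
nra.
Qed.

Let z : state T N R := fun r v => xi r v + t * Dl r v.

Lemma z_inB : in_B F z.
Proof.
move=> r; split.
- move=> S; rewrite /z big_split /= -mulr_sumr.
  case: (boolP (tight (F r) (xi r) S)) => hS.
    have := Dl_tight hS; have := t_gt0; move: hS => /eqP hS; nra.
  have := sigma_le hS; have := Dl_le r S; have := tL; have := t_gt0; rewrite /sl.
  nra.
- rewrite /z big_split /= -mulr_sumr Dl_sumv mulr0 addr0.
  by case: (Hxi r).
Qed.

Lemma z_A v : Aop z v = Aop xi v.
Proof. by rewrite /Aop /z big_split /= -mulr_sumr Dl_sumr mulr0 addr0. Qed.

Lemma sum3 (I J : finType) (a b d : I -> J -> T) (k1 k2 : T) :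
  \sum_i \sum_j (a i j - k1 * b i j + k2 * d i j) =
  \sum_i \sum_j a i j - k1 * \sum_i \sum_j b i j + k2 * \sum_i \sum_j d i j.
Proof.
rewrite !mulr_sumr -sumrB -big_split /=; apply: eq_bigr => i _.
by rewrite !mulr_sumr -sumrB -big_split.
Qed.

Lemma z_dist : bsq nv (ssub y z) = bsq nv (ssub y xi) - 2 * t * c + t ^+ 2 * q.
Proof.
rewrite -c_eq /q /bsq /wsq /ssub /vsub /z.
rewrite -(sum3 (fun r i => nv i * (y r i - xi r i) ^+ 2) (fun r v => nv v * dl r v * Dl r v)
  (fun r v => nv v * Dl r v ^+ 2)).
by apply: eq_bigr => r _; apply: eq_bigr => v _; rewrite /dl; ring.
Qed.

Lemma no_cycle : False.
Proof.
have h := Hmin z_inB z_A; rewrite z_dist in h.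
have := tq; have := t_gt0; have := c_gt0; move: h.
set D := bsq _ _; nra.
Qed.

End Cycle.

Lemma acyclic i : ~~ [exists m, connect eg i m && eg m i].
Proof.
apply/negP => /existsP [m /andP [/connectP [s hp hl] he]].
apply: (@no_cycle i (rcons s i)).
- by rewrite rcons_path hp -hl he.
- by rewrite last_rcons.
- by case: s {hp hl}.
Qed.

Definition pA j := Aop y j - Aop xi j.
Definition Fz := \sum_j negp (pA j).

Lemma pA_sum j : pA j = \sum_r dl r j.
Proof. by rewrite /pA /Aop /dl sumrB. Qed.

Lemma sub_negp (X : {set 'I_N}) : \sum_(j in X) - pA j <= Fz.
Proof.
apply: (@le_trans _ _ (\sum_(j in X) negp (pA j))).
  by apply: ler_sum => j _; apply: le_negp.
rewrite /Fz sum_in_ind; apply: ler_sum => j _.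
by case: (j \in X); rewrite ?mul1r ?mul0r ?negp_ge0.
Qed.

Lemma sumY (X : {set 'I_N}) : \sum_r - \sum_(j in X) dl r j = \sum_(j in X) - pA j.
Proof.
rewrite sumrN exchange_big /= -sumrN; apply: eq_bigr => j _; by rewrite pA_sum.
Qed.

Lemma pos_bound i : \sum_r posp (dl r i) <= Fz.
Proof.
pose Y := [set k | [exists m, connect eg k m && eg m i]].
have hY : forall k j, eg k j -> j \in Y -> k \in Y.
  move=> k j hkj; rewrite !inE => /existsP [m /andP [hc he]].
  apply/existsP; exists m; rewrite he andbT.
  exact: connect_trans (connect1 hkj) hc.
have hYi : forall k j, eg k j -> j \in i |: Y -> k \in i |: Y.
  move=> k j hkj; rewrite !inE => /orP [/eqP hj|hj]; last first.
    by apply/orP; right; move: (hY k j hkj); rewrite !inE; apply.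
  apply/orP; right; apply/existsP; exists k; rewrite connect0 /=.
  by rewrite -hj.
have iY : i \notin Y by rewrite inE; apply: acyclic.
apply: le_trans (sub_negp Y); rewrite -sumY; apply: ler_sum => r _.
have h1 := inclosed_le hY r; have h2 := inclosed_le hYi r.
rewrite big_setU1 //= in h2.
case: (pn_cases (dl r i)) => [[-> _]|[-> _]]; lra.
Qed.

Lemma neg_bound i : \sum_r negp (dl r i) <= Fz.
Proof.
pose Z := [set k | [exists m, connect eg i m && eg m k]].
have hZ : forall k j, eg k j -> j \in ~: Z -> k \in ~: Z.
  move=> k j hkj; rewrite !inE; apply: contra => /existsP [m /andP [hc he]].
  apply/existsP; exists k; rewrite hkj andbT.
  exact: connect_trans hc (connect1 he).
have iZ : i \in ~: Z by rewrite !inE; apply: acyclic.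
have hZi : forall k j, eg k j -> j \in (~: Z) :\ i -> k \in (~: Z) :\ i.
  move=> k j hkj; rewrite !inE => /andP [hji hj].
  apply/andP; split; last by apply: contra hj => /existsP [m /andP [hc he]];
    apply/existsP; exists k; rewrite hkj andbT; exact: connect_trans hc (connect1 he).
  apply: contra hj => /eqP hk; apply/existsP; exists i; by rewrite connect0 /= -hk.
apply: le_trans (sub_negp (~: Z)); rewrite -sumY; apply: ler_sum => r _.
have h1 := inclosed_le hZ r; have h2 := inclosed_le hZi r.
rewrite (big_setD1 i iZ) /= in h1.
case: (pn_cases (dl r i)) => [[_ [-> _]]|[_ [-> _]]]; rewrite (big_setD1 i iZ) /=; lra.
Qed.

Lemma pA_sum0 : \sum_j pA j = 0.
Proof.
under eq_bigr => j _ do rewrite pA_sum.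
rewrite exchange_big /= big1 // => r _.
rewrite /dl sumrB; case: (Hy r) => _ ->; case: (Hxi r) => _ ->; by rewrite subrr.
Qed.

Lemma hoffman (w : 'I_N -> T) : (forall i, 0 < w i) ->
  bsq nv (ssub y xi) <=
  2^-1 * ((\sum_i w i) * (\sum_i nv i)) * \sum_i (w i)^-1 * pA i ^+ 2.
Proof.
move=> Hw.
have S1 : \sum_j posp (pA j) = Fz.
  have : \sum_j (posp (pA j) - negp (pA j)) = 0.
    by rewrite -[RHS]pA_sum0; apply: eq_bigr => j _; rewrite pn_sub.
  by rewrite sumrB /Fz => /eqP; rewrite subr_eq0 => /eqP.
have S2 : \sum_j `|pA j| = 2 * Fz.
  under eq_bigr => j _ do rewrite pn_abs.
  rewrite big_split /= S1 -/Fz; ring.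
have S3 := CSw (fun j => `|pA j|) Hw.
rewrite S2 in S3.
have S3' : \sum_i `|pA i| ^+ 2 / w i = \sum_i (w i)^-1 * pA i ^+ 2.
  by apply: eq_bigr => i _; rewrite real_normK ?num_real // mulrC.
rewrite S3' in S3.
have Fz0 : 0 <= Fz by apply: sumr_ge0 => j _; apply: negp_ge0.
have S5 : forall i, \sum_r dl r i ^+ 2 <= 2 * Fz ^+ 2.
  move=> i.
  under eq_bigr => r _ do rewrite pn_sq.
  rewrite big_split /=.
  have a1 := sum_sq_le (fun r => posp_ge0 (dl r i)).
  have a2 := sum_sq_le (fun r => negp_ge0 (dl r i)).
  have b1 := pos_bound i; have b2 := neg_bound i.
  have c1 : 0 <= \sum_r posp (dl r i) by apply: sumr_ge0 => r _; apply: posp_ge0.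
  have c2 : 0 <= \sum_r negp (dl r i) by apply: sumr_ge0 => r _; apply: negp_ge0.
  nra.
have S4 : bsq nv (ssub y xi) <= (\sum_i nv i) * (2 * Fz ^+ 2).
  rewrite /bsq /wsq /ssub /vsub exchange_big /= mulr_suml; apply: ler_sum => i _.
  rewrite -mulr_sumr; apply: ler_wpM2l; first exact: ltW.
  exact: S5.
have nv0 : 0 <= \sum_i nv i by apply: sumr_ge0 => i _; apply: ltW.
apply: le_trans S4 _.
have : (\sum_i nv i) * (2 * Fz) ^+ 2 <= (\sum_i nv i) * ((\sum_i w i) * \sum_i (w i)^-1 * pA i ^+ 2).
  by apply: ler_wpM2l.
nra.
Qed.

End Hoff.


Section Main.
Variables (T : rcfType) (N R K : nat) (F : 'I_R -> {set 'I_N} -> T) (w : 'I_N -> T).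
Hypotheses (HF : forall r, submodular (F r)) (Hw : forall i, 0 < w i)
  (HR : (2 <= R)%N) (HK1 : (1 <= K)%N) (HKR : (K <= R)%N)
  (Hmu : forall i, (1 <= mu F i)%N).
Variable P : 'I_R -> vec T N -> vec T N.
Hypothesis HP : is_proj F (nu K F w) P.
Variable gs : T.
Hypothesis Hgs2 : forall y, in_B F y -> gs <= gw w y.
Variable d2 : state T N R -> T.
Hypothesis Hd2 : forall y : state T N R,
     (exists z, (in_B F z /\ gw w z = gs) /\ d2 y = bsq (nu K F w) (ssub y z)) /\
     (forall z, in_B F z -> gw w z = gs -> d2 y <= bsq (nu K F w) (ssub y z)).

Let nv := nu K F w.
Definition mm i : T := (K - 1)%:R / (R - 1)%:R * (mu F i)%:R + (R - K)%:R / (R - 1)%:R.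

Lemma nvE i : nv i = (w i)^-1 * mm i.
Proof. by []. Qed.

Lemma Rm1_gt0 : 0 < (R - 1)%:R :> T.
Proof. rewrite ltr0n; lia. Qed.

Lemma mm_ge1 i : 1 <= mm i.
Proof.
have hd : (R - 1)%:R = (K - 1)%:R + (R - K)%:R :> T.
  by rewrite -natrD; congr (_%:R); lia.
have hmu : 1 <= (mu F i)%:R :> T by rewrite ler1n.
have h0 := Rm1_gt0.
have ha : 0 <= (K - 1)%:R :> T by [].
rewrite /mm -mulrAC -mulrDl ler_pdivlMr // mul1r hd.
nra.
Qed.

Lemma nv_gt0 i : 0 < nv i.
Proof.
rewrite nvE; apply: mulr_gt0; first by rewrite invr_gt0.
by apply: lt_le_trans (mm_ge1 i).
Qed.

Lemma gw_expand (y z : state T N R) :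
  gw w z = gw w y + \sum_i (w i)^-1 * Aop y i * (Aop z i - Aop y i)
           + 2^-1 * \sum_i (w i)^-1 * (Aop z i - Aop y i) ^+ 2.
Proof.
rewrite /gw /wsq !mulr_sumr -!big_split /=; apply: eq_bigr => i _; move: ((w i)^-1) => a; by field.
Qed.

Lemma Aop_conv (y z : state T N R) t i :
  Aop (fun r j => y r j + t * (z r j - y r j)) i = Aop y i + t * (Aop z i - Aop y i).
Proof. by rewrite /Aop big_split /= -mulr_sumr sumrB. Qed.

Lemma first_order (xi y : state T N R) : in_B F xi -> gw w xi = gs -> in_B F y ->
  0 <= \sum_i (w i)^-1 * Aop xi i * (Aop y i - Aop xi i).
Proof.
move=> hxi hg hy.
apply: (quad_lemma (q := \sum_i (w i)^-1 * (Aop y i - Aop xi i) ^+ 2)).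
  apply: sumr_ge0 => i _; apply: mulr_ge0; [by rewrite invr_ge0 ltW | exact: sqr_ge0].
move=> t t0 t1.
pose zt : state T N R := fun r j => xi r j + t * (y r j - xi r j).
have hz : in_B F zt by move=> r; apply: base_convex => //; rewrite ltW.
have := Hgs2 hz; rewrite (gw_expand xi zt) hg.
under eq_bigr => i _ do rewrite Aop_conv.
under [X in _ + 2^-1 * X]eq_bigr => i _ do rewrite Aop_conv.
have e1 : \sum_i (w i)^-1 * Aop xi i * (Aop xi i + t * (Aop y i - Aop xi i) - Aop xi i)
  = t * \sum_i (w i)^-1 * Aop xi i * (Aop y i - Aop xi i).
  by rewrite mulr_sumr; apply: eq_bigr => i _; ring.
have e2 : \sum_i (w i)^-1 * (Aop xi i + t * (Aop y i - Aop xi i) - Aop xi i) ^+ 2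
  = t ^+ 2 * \sum_i (w i)^-1 * (Aop y i - Aop xi i) ^+ 2.
  by rewrite mulr_sumr; apply: eq_bigr => i _; ring.
rewrite e1 e2; lra.
Qed.

Lemma proj_ineq r u (z : vec T N) : in_base (F r) z ->
  0 <= \sum_i nv i * (P r u i - u i) * (z i - P r u i).
Proof.
move=> hz; have [hb hmin] := HP r u.
apply: (quad_lemma (q := \sum_i nv i * (z i - P r u i) ^+ 2)).
  apply: sumr_ge0 => i _; apply: mulr_ge0; [exact: ltW (nv_gt0 i) | exact: sqr_ge0].
move=> t t0 t1.
have hz' := base_convex hb hz (t := t); rewrite ltW ?t1 //= in hz'.
have := hmin _ (hz' isT); rewrite /wsq /vsub => h.
have e : \sum_i nv i * (P r u i + t * (z i - P r u i) - u i) ^+ 2 =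
  \sum_i nv i * (P r u i - u i) ^+ 2 + (2 * t * \sum_i nv i * (P r u i - u i) * (z i - P r u i)
   + t ^+ 2 * \sum_i nv i * (z i - P r u i) ^+ 2).
  rewrite !mulr_sumr -!big_split /=; apply: eq_bigr => i _; ring.
rewrite e in h; lra.
Qed.

Lemma step_inB C y : in_B F y -> in_B F (step w nv P C y).
Proof. move=> hy r; rewrite /step; case: (r \in C); [exact: (HP r _).1 | exact: hy]. Qed.

Let c0 : T := #|Ksets R K|%:R.

Lemma c0_gt0 : 0 < c0.
Proof. by rewrite /c0 card_Ksets ltr0n bin_gt0. Qed.

Lemma R_gt0 : 0 < R%:R :> T.
Proof. rewrite ltr0n; lia. Qed.

Lemma Rm1E : (R - 1)%:R = R%:R - 1 :> T.
Proof. by rewrite natrB //; lia. Qed.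
Lemma Km1E : (K - 1)%:R = K%:R - 1 :> T.
Proof. by rewrite natrB. Qed.
Lemma RmKE : (R - K)%:R = R%:R - K%:R :> T.
Proof. by rewrite natrB. Qed.

Let k1 : T := K%:R / R%:R * c0.
Let k2 : T := K%:R * (K%:R - 1) / (R%:R * (R%:R - 1)) * c0.

Lemma cntE (r s : 'I_R) :
  \sum_(C in Ksets R K) ((r \in C)%:R * (s \in C)%:R : T) = k2 + (r == s)%:R * (k1 - k2).
Proof.
have hR := R_gt0; have hR1 := Rm1_gt0; rewrite Rm1E in hR1.
case: eqP => [<-|/eqP hrs].
  rewrite mul1r addrC subrK /k1.
  under eq_bigr => C _ do rewrite -natrM mulnb andbb.
  have := cnt1 T r HK1; move=> h; apply: (mulfI (x := R%:R)); first by rewrite gt_eqF.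
  by rewrite h; field; rewrite gt_eqF.
rewrite mul0r addr0 /k2.
have := cnt2 T HK1 hrs => h.
apply: (mulfI (x := R%:R * (R%:R - 1))); first by rewrite mulf_neq0 // gt_eqF.
rewrite h; field; by rewrite !gt_eqF.
Qed.

Lemma k2_ge0 : 0 <= k2.
Proof.
have hR := R_gt0; have hR1 := Rm1_gt0; rewrite Rm1E in hR1.
have hK : 0 <= K%:R - 1 :> T by rewrite -Km1E.
have hc := c0_gt0.
rewrite /k2; apply: mulr_ge0; last exact: ltW.
by apply: divr_ge0; apply: mulr_ge0 => //; apply: ltW.
Qed.

Lemma k_mm i : k2 * (mu F i)%:R + (k1 - k2) = c0 * (K%:R / R%:R * mm i).
Proof.
have hR := R_gt0; have hR1 := Rm1_gt0.
rewrite /k1 /k2 /mm Km1E RmKE Rm1E; rewrite Rm1E in hR1.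
by field; rewrite !gt_eqF.
Qed.

Lemma eso_coord (a : 'I_R -> T) (i : 'I_N) :
  (forall r, i \notin supp (F r) -> a r = 0) ->
  \sum_(C in Ksets R K) (\sum_r (r \in C)%:R * a r) ^+ 2
   <= c0 * (K%:R / R%:R * mm i) * \sum_r a r ^+ 2.
Proof.
move=> ha.
have e1 : \sum_(C in Ksets R K) (\sum_r (r \in C)%:R * a r) ^+ 2 =
   \sum_r \sum_s a r * a s * \sum_(C in Ksets R K) ((r \in C)%:R * (s \in C)%:R).
  under eq_bigr => C _ do rewrite sq_sum.
  rewrite exchange_big /=; apply: eq_bigr => r _.
  rewrite exchange_big /=; apply: eq_bigr => s _.
  by rewrite mulr_sumr; apply: eq_bigr => C _; ring.
rewrite e1.
under eq_bigr => r _ do under eq_bigr => s _ do rewrite cntE.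
have e2 : \sum_r \sum_s a r * a s * (k2 + (r == s)%:R * (k1 - k2)) =
   k2 * (\sum_r a r) ^+ 2 + (k1 - k2) * \sum_r a r ^+ 2.
  rewrite sq_sum !mulr_sumr -big_split /=; apply: eq_bigr => r _.
  have -> : (k1 - k2) * a r ^+ 2 = \sum_s (r == s)%:R * ((k1 - k2) * (a r * a s)).
    by rewrite (sum_eq_l r (fun s => (k1 - k2) * (a r * a s))); ring.
  rewrite !mulr_sumr -big_split /=; apply: eq_bigr => s _; ring.
rewrite e2 -k_mm.
have hcs : (\sum_r a r) ^+ 2 <= (mu F i)%:R * \sum_r a r ^+ 2.
  have -> : \sum_r a r = \sum_r (i \in supp (F r))%:R * a r.
    apply: eq_bigr => r _; case: (boolP (i \in supp (F r))) => h.
      by rewrite mul1r.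
    by rewrite ha // mulr0.
  apply: le_trans (CS1 _ _) _.
  rewrite ler_wpM2r ?sumr_ge0 // => [r _|]; first exact: sqr_ge0.
  rewrite /mu.
  have -> : \sum_r ((i \in supp (F r))%:R : T) ^+ 2 = \sum_(r in [set r | i \in supp (F r)]) 1.
    rewrite [RHS]big_mkcond /=; apply: eq_bigr => r _.
    have hm : (r \in [set r0 | i \in supp (F r0)]) = (i \in supp (F r)) by rewrite !inE.
    by rewrite hm; case: (i \in supp (F r)); rewrite ?expr1n ?expr0n.
  by rewrite sumr_const.
have := k2_ge0; have : 0 <= \sum_r a r ^+ 2 by apply: sumr_ge0 => r _; apply: sqr_ge0.
nra.
Qed.

Section OneStep.
Variables (y xi : state T N R).
Hypotheses (hy : in_B F y) (hxiB : in_B F xi) (hxig : gw w xi = gs)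
  (hd : d2 y = bsq nv (ssub y xi)).

Let gr i := (w i)^-1 * Aop y i.
Let uu r i := y r i - (nv i)^-1 * gr i.
Let yh r := P r (uu r).
Let hh r i := yh r i - y r i.
Let hC (C : {set 'I_R}) i := \sum_r (r \in C)%:R * hh r i.

Let EC (C : {set 'I_R}) := \sum_(i : 'I_N) (w i)^-1 * hC C i ^+ 2.

Lemma step_eq C r i : step w nv P C y r i = y r i + (r \in C)%:R * hh r i.
Proof. by rewrite /step /hh /yh /uu /gr; case: (r \in C); rewrite /= ?mul1r ?mul0r ?addr0 // addrC subrK. Qed.

Lemma Astep C i : Aop (step w nv P C y) i = Aop y i + hC C i.
Proof. by rewrite /Aop /hC -big_split; apply: eq_bigr => r _; rewrite step_eq. Qed.

Lemma gw_step C : gw w (step w nv P C y) = gw w y + \sum_r (r \in C)%:R * (\sum_i gr i * hh r i)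
   + 2^-1 * EC C.
Proof.
rewrite (gw_expand y (step w nv P C y)) /EC.
under eq_bigr => i _ do rewrite Astep addrAC subrr add0r.
under [X in _ + 2^-1 * X]eq_bigr => i _ do rewrite Astep addrAC subrr add0r.
congr (_ + _ + _).
rewrite /hC.
under eq_bigr => i _ do rewrite mulr_sumr.
rewrite exchange_big /=; apply: eq_bigr => r _; rewrite mulr_sumr; apply: eq_bigr => i _.
by rewrite /gr; ring.
Qed.

Lemma d2_step C : d2 (step w nv P C y) <= bsq nv (ssub y xi) +
   \sum_r (r \in C)%:R * \sum_i nv i * (2 * (y r i - xi r i) * hh r i + hh r i ^+ 2).
Proof.
apply: le_trans ((Hd2 _).2 xi hxiB hxig) _; rewrite le_eqVlt; apply/orP; left; apply/eqP.
rewrite /bsq -big_split /=; apply: eq_bigr => r _.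
rewrite /wsq /ssub /vsub mulr_sumr -big_split /=; apply: eq_bigr => i _.
rewrite step_eq; case: (r \in C); rewrite /= -/nv; ring.
Qed.

Let Lr r := \sum_i gr i * hh r i + 2^-1 * \sum_i nv i * (2 * (y r i - xi r i) * hh r i + hh r i ^+ 2).

Lemma Lr_le r : Lr r <= \sum_i gr i * (xi r i - y r i) - 2^-1 * \sum_i nv i * hh r i ^+ 2.
Proof.
have h := proj_ineq (uu r) (hxiB r).
rewrite -subr_ge0.
have -> : \sum_i gr i * (xi r i - y r i) - 2^-1 * \sum_i nv i * hh r i ^+ 2 - Lr r =
   \sum_i nv i * (P r (uu r) i - uu r i) * (xi r i - P r (uu r) i).
  rewrite /Lr !mulr_sumr -!sumrB -!big_split /= -!sumrB; apply: eq_bigr => i _.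
  rewrite /hh /yh /uu; have := nv_gt0 i; move: (gr i) => g hn.
  by field; rewrite gt_eqF.
exact: h.
Qed.

Let Phi (z : state T N R) := gw w z - gs + 2^-1 * d2 z.
Let Q := \sum_i (w i)^-1 * (Aop xi i - Aop y i) ^+ 2.

Lemma hh_supp r i : i \notin supp (F r) -> hh r i = 0.
Proof.
move=> h; rewrite /hh /yh (supp0 (HF r) (HP r (uu r)).1 h) (supp0 (HF r) (hy r) h).
by rewrite subrr.
Qed.

Lemma Phi_step C : Phi (step w nv P C y) <= Phi y + \sum_r (r \in C)%:R * Lr r
   + 2^-1 * EC C.
Proof.
have h1 := gw_step C; have h2 := d2_step C.
have e : \sum_r (r \in C)%:R * Lr r = \sum_r (r \in C)%:R * (\sum_i gr i * hh r i)
   + 2^-1 * \sum_r (r \in C)%:R * \sum_i nv i * (2 * (y r i - xi r i) * hh r i + hh r i ^+ 2).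
  rewrite mulr_sumr -big_split /=; apply: eq_bigr => r _; rewrite /Lr; ring.
rewrite /Phi /= h1 e; move: h2; rewrite hd; lra.
Qed.

Lemma avg_bound : c0^-1 * \sum_(C in Ksets R K) Phi (step w nv P C y) <=
   Phi y + K%:R / R%:R * (gs - gw w y - 2^-1 * Q).
Proof.
have hc := c0_gt0; have hR := R_gt0.
have hL : \sum_(C in Ksets R K) \sum_r (r \in C)%:R * Lr r = c0 * (K%:R / R%:R) * \sum_r Lr r.
  rewrite exchange_big /= mulr_sumr; apply: eq_bigr => r _.
  rewrite -mulr_suml; congr (_ * _).
  have := cnt1 T r HK1 => h; apply: (mulfI (x := R%:R)); first by rewrite gt_eqF.
  rewrite h -/c0; field; by rewrite gt_eqF.
have hA0 : \sum_(C in Ksets R K) Phi (step w nv P C y) <=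
    \sum_(C in Ksets R K) (Phi y + \sum_r (r \in C)%:R * Lr r + 2^-1 * EC C).
  by apply: ler_sum => C _; apply: Phi_step.
set Py := Phi y in hA0 *.
have hA : \sum_(C in Ksets R K) Phi (step w nv P C y) <=
    c0 * Py + c0 * (K%:R / R%:R) * \sum_r Lr r + 2^-1 * \sum_(C in Ksets R K) EC C.
  apply: le_trans hA0 _.
  rewrite big_split /= big_split /= sumr_const -mulr_sumr hL -[Py *+ _]mulr_natl.
  exact: lexx.
have hE : \sum_(C in Ksets R K) EC C <= c0 * (K%:R / R%:R) * \sum_r \sum_i nv i * hh r i ^+ 2.
  rewrite /EC exchange_big /= [X in _ <= _ * X]exchange_big /= mulr_sumr; apply: ler_sum => i _.
  rewrite -mulr_sumr.
  have := eso_coord (a := fun r => hh r i) (i := i) (fun r h => hh_supp h) => h.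
  have -> : c0 * (K%:R / R%:R) * \sum_r nv i * hh r i ^+ 2 =
     (w i)^-1 * (c0 * (K%:R / R%:R * mm i) * \sum_r hh r i ^+ 2).
    by rewrite -!mulr_sumr nvE; ring.
  apply: ler_wpM2l; first by rewrite invr_ge0 ltW.
  exact: h.
have hLr : \sum_r Lr r <= \sum_r \sum_i gr i * (xi r i - y r i)
    - 2^-1 * \sum_r \sum_i nv i * hh r i ^+ 2.
  rewrite mulr_sumr -sumrB; apply: ler_sum => r _; exact: Lr_le.
have hLin : \sum_r \sum_i gr i * (xi r i - y r i) = gs - gw w y - 2^-1 * Q.
  have := gw_expand y xi; rewrite hxig => ->.
  rewrite /Q /gr exchange_big /=.
  have -> : \sum_i \sum_r (w i)^-1 * Aop y i * (xi r i - y r i) =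
     \sum_i (w i)^-1 * Aop y i * (Aop xi i - Aop y i).
    by apply: eq_bigr => i _; rewrite -mulr_sumr /Aop sumrB.
  ring.
rewrite hLin in hLr.
have hK : 0 <= K%:R / R%:R :> T by rewrite divr_ge0 // ltW.
set X := \sum_r \sum_i nv i * hh r i ^+ 2 in hE hLr.
set Lsum := \sum_r Lr r in hA hLr.
set SE := \sum_(C in Ksets R K) EC C in hA hE.
set Sp := \sum_(C in Ksets R K) Phi (step w nv P C y) in hA *.
set kk := K%:R / R%:R in hK hA hE *.
have : Sp <= c0 * (Py + kk * (gs - gw w y - 2^-1 * Q)).
  have h3 : c0 * kk * Lsum <= c0 * kk * (gs - gw w y - 2^-1 * Q - 2^-1 * X).
    apply: ler_wpM2l; [apply: mulr_ge0 => //; exact: ltW | exact: hLr].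
  nra.
move=> h; rewrite ler_pdivrMl //.
Qed.

Lemma one_step : let Hs := (\sum_i w i) * (\sum_i nv i) in 2 <= Hs ->
  c0^-1 * \sum_(C in Ksets R K) Phi (step w nv P C y) <=
  (1 - 4 * K%:R / (R%:R * (Hs + 2))) * Phi y.
Proof.
move=> Hs H2.
have hR := R_gt0.
have hFO := first_order hxiB hxig hy.
have hexp := gw_expand xi y; rewrite hxig in hexp.
have eQ : \sum_i (w i)^-1 * (Aop y i - Aop xi i) ^+ 2 = Q.
  by apply: eq_bigr => i _; congr (_ * _); ring.
rewrite eQ in hexp.
have hG : 2^-1 * Q <= gw w y - gs by lra.
have hQ : 0 <= Q by apply: sumr_ge0 => i _; apply: mulr_ge0; [rewrite invr_ge0 ltW | apply: sqr_ge0].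
have r0 : 'I_R by exists 0%N; lia.
have hmin : forall z, in_B F z -> (forall i, Aop z i = Aop xi i) ->
   bsq nv (ssub y xi) <= bsq nv (ssub y z).
  move=> z hz hA; rewrite -hd; apply: (Hd2 y).2 => //.
  rewrite -hxig /gw /wsq; congr (_ * _); apply: eq_bigr => i _; by rewrite hA.
have hH := hoffman nv_gt0 HF r0 hy hxiB hmin Hw.
rewrite -hd -/Hs in hH.
have eQ' : \sum_i (w i)^-1 * pA y xi i ^+ 2 = Q.
  by rewrite -eQ; apply: eq_bigr => i _; rewrite /pA.
rewrite eQ' in hH.
have hav := avg_bound.
apply: le_trans hav _.
rewrite /Phi.
set G := gw w y - gs in hG *.
set D := d2 y in hH *.
have hK : 0 <= K%:R :> T by [].
have hKR : K%:R <= R%:R :> T by rewrite ler_nat.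
have hH2 : 0 < Hs + 2 by lra.
have e4 : 4 * K%:R / (R%:R * (Hs + 2)) = K%:R / R%:R * (4 / (Hs + 2)).
  by field; rewrite !gt_eqF.
rewrite e4.
have e5 : gs - gw w y - 2^-1 * Q = - (G + 2^-1 * Q) by rewrite /G; ring.
rewrite e5.
have hkey : 4 / (Hs + 2) * (G + 2^-1 * D) <= G + 2^-1 * Q.
  have : 0 <= (Hs - 2) * (G - 2^-1 * Q) by apply: mulr_ge0; lra.
  move=> hp.
  have h4 : 4 * (G + 2^-1 * D) <= (G + 2^-1 * Q) * (Hs + 2) by nra.
  by rewrite mulrAC ler_pdivrMr.
have hk : 0 <= K%:R / R%:R :> T by rewrite divr_ge0 // ltW.
have := ler_wpM2l hk hkey.
nra.
Qed.

End OneStep.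

Let Phi0 (z : state T N R) := gw w z - gs + 2^-1 * d2 z.
Let Hs := (\sum_i w i) * (\sum_i nv i).
Let rho := 4 * K%:R / (R%:R * (Hs + 2)).

Lemma one_step_all y : in_B F y -> 2 <= Hs ->
  c0^-1 * \sum_(C in Ksets R K) Phi0 (step w nv P C y) <= (1 - rho) * Phi0 y.
Proof.
move=> hy h2; have [[xi [[hxiB hxig] hd]] _] := Hd2 y.
exact: (one_step hy hxiB hxig hd h2).
Qed.

Lemma Hs_ge2 : (2 <= N)%N -> 2 <= Hs.
Proof.
move=> hN.
have h1 : \sum_i w i * nv i <= Hs.
  rewrite /Hs mulr_suml; apply: ler_sum => i _; rewrite mulr_sumr.
  rewrite (bigD1 i) //= lerDl; apply: sumr_ge0 => j _.
  by apply: mulr_ge0; apply: ltW; [apply: Hw | apply: nv_gt0].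
have h2 : N%:R <= \sum_i w i * nv i.
  rewrite -[N in N%:R]card_ord -sumr_const; apply: ler_sum => i _.
  rewrite nvE mulrA mulfV ?mul1r ?mm_ge1 //; have := Hw i; by rewrite lt0r => /andP[].
have h3 : 2 <= N%:R :> T by rewrite ler_nat.
lra.
Qed.

Lemma rho_le1 : 2 <= Hs -> 0 <= 1 - rho.
Proof.
move=> h2; have hR := R_gt0.
have hKR' : K%:R <= R%:R :> T by rewrite ler_nat.
rewrite subr_ge0 /rho ler_pdivrMr; last by apply: mulr_gt0 => //; lra.
nra.
Qed.

Lemma expect_step k y :
  expect K w nv P Phi0 k.+1 y = c0^-1 * \sum_(C in Ksets R K) expect K w nv P Phi0 k (step w nv P C y).
Proof. by []. Qed.

Lemma expect_bound k : 2 <= Hs -> forall y, in_B F y ->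
  expect K w nv P Phi0 k y <= (1 - rho) ^+ k * Phi0 y.
Proof.
move=> h2; elim: k => [|k IH] y hy; first by rewrite /= expr0 mul1r.
rewrite expect_step.
have hc := c0_gt0; have hr := rho_le1 h2.
apply: (@le_trans _ _ (c0^-1 * \sum_(C in Ksets R K) ((1 - rho) ^+ k * Phi0 (step w nv P C y)))).
  apply: ler_wpM2l; first by rewrite invr_ge0 ltW.
  by apply: ler_sum => C _; apply: IH; apply: step_inB.
rewrite -mulr_sumr mulrCA exprSr -mulrA.
apply: ler_wpM2l; first exact: exprn_ge0.
exact: one_step_all.
Qed.

Lemma base_eq1 (f : {set 'I_N} -> T) u v : (N <= 1)%N -> in_base f u -> in_base f v ->
  forall i, u i = v i.
Proof.
move=> hN [_ hu] [_ hv] i.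
have e : forall x : 'I_N -> T, \sum_j x j = x i.
  move=> x; rewrite (bigD1 i) //= big1 ?addr0 // => j hj.
  exfalso; move: hj; apply/negP; rewrite negbK; apply/eqP; apply: val_inj.
  have := ltn_ord i; have := ltn_ord j; rewrite /=; lia.
by rewrite -(e u) -(e v) hu hv.
Qed.

Lemma Phi_zero : (N <= 1)%N -> forall y, in_B F y -> Phi0 y = 0.
Proof.
move=> hN y hy; have [[xi [[hxiB hxig] hd]] _] := Hd2 y.
have he : forall r i, y r i = xi r i by move=> r i; apply: (base_eq1 hN (hy r) (hxiB r)).
rewrite /Phi0 hd.
have -> : gw w y = gw w xi.
  rewrite /gw /wsq; congr (_ * _); apply: eq_bigr => i _; congr (_ * _).
  by congr (_ ^+ _); rewrite /Aop; apply: eq_bigr => r _; rewrite he.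
rewrite hxig subrr add0r /bsq big1 ?mulr0 // => r _.
by rewrite /wsq big1 // => i _; rewrite /ssub /vsub he subrr expr0n /= mulr0.
Qed.

Lemma expect_zero k : (N <= 1)%N -> forall y, in_B F y -> expect K w nv P Phi0 k y = 0.
Proof.
move=> hN; elim: k => [|k IH] y hy; first exact: Phi_zero.
rewrite expect_step big1 ?mulr0 // => C _; apply: IH; exact: step_inB.
Qed.

Lemma final k y0 : in_B F y0 ->
  expect K w nv P Phi0 k y0 <= (1 - rho) ^+ k * Phi0 y0.
Proof.
move=> hy.
case: (leqP N 1) => hN.
  by rewrite expect_zero // Phi_zero // mulr0.
exact: expect_bound (Hs_ge2 hN) _ hy.
Qed.

End Main.


Unset Implicit Arguments.
Set Strict Implicit.

Theorem mainTheorem17 (T : rcfType) (N R K : nat)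
  (F : 'I_R -> {set 'I_N} -> T) (w : 'I_N -> T)
  (HF : forall r, submodular (F r))
  (Hw : forall i, 0 < w i)
  (HR : (2 <= R)%N) (HK1 : (1 <= K)%N) (HKR : (K <= R)%N)
  (Hmu : forall i, (1 <= mu F i)%N)
  (P : 'I_R -> vec T N -> vec T N)
  (HP : is_proj F (nu K F w) P)
  (gs : T)
  (Hgs1 : exists y, in_B F y /\ gw w y = gs)
  (Hgs2 : forall y, in_B F y -> gs <= gw w y)
  (d2 : state T N R -> T)
  (Hd2 : forall y : state T N R,
     (exists z, (in_B F z /\ gw w z = gs) /\ d2 y = bsq (nu K F w) (ssub y z)) /\
     (forall z, in_B F z -> gw w z = gs -> d2 y <= bsq (nu K F w) (ssub y z)))
  (y0 : state T N R) (Hy0 : in_B F y0) (k : nat) :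
  expect K w (nu K F w) P (fun y => gw w y - gs + 2^-1 * d2 y) k y0
  <= (1 - (4 * K%:R) /
          (R%:R * ((\sum_i `|w i|) * (\sum_i `|nu K F w i|) + 2))) ^+ k
     * (gw w y0 - gs + 2^-1 * d2 y0).
Proof.
have e1 : \sum_i `|w i| = \sum_i w i by apply: eq_bigr => i _; rewrite ger0_norm // ltW.
have e2 : \sum_i `|nu K F w i| = \sum_i nu K F w i.
  by apply: eq_bigr => i _; rewrite ger0_norm // ltW // (nv_gt0 Hw HR HK1 HKR Hmu).
rewrite e1 e2.
exact: (final HF Hw HR HK1 HKR Hmu HP Hgs2 Hd2 k Hy0).
Qed.
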